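(* Let $G=(V,E)$ be a $d$-regular undirected graph on $n=|V|$ vertices with $0<d<n$, where $E\subseteq V\times V$ is viewed as a symmetric set of ordered pairs (so $|E|=dn$). Let $g,h\colon V\to V$ be arbitrary functions and let $f=(g,h)\colon V\times V\to V\times V$ be given by $f(u,v)=(g(u),h(v))$. Let $$T=\Pr_{b\xleftarrow{u}\{0,1\}}\big(\mathrm{dec}_G(f(\mathrm{enc}_G(b)))=1-b\big),$$ where the probability is over the uniform choice of $b$ and the randomness of $\mathrm{enc}_G$. Then $$T=\frac12+\frac{1}{2d(n-d)}\sum_{(v,u)\in E}\left(\frac{d\,|g^{-1}(v)|\cdot|h^{-1}(u)|}{n}-\big|E\big(g^{-1}(v),h^{-1}(u)\big)\big|\right).$$
   Context: For subsets $S,T\subseteq V$, $E(S,T)=\{(v,u)\in S\times T : (v,u)\in E\}$ (directed edges from $S$ to $T$). The graph code $(\mathrm{enc}_G,\mathrm{dec}_G)$ of $G$ consists of a randomized map $\mathrm{enc}_G\colon\{0,1\}\to V\times V$ and a deterministic map $\mathrm{dec}_G\colon V\times V\to\{0,1\}$: $\mathrm{enc}_G(0)$ is a uniformly random pair $(u,v)\in (V\times V)\setminus E$, $\mathrm{enc}_G(1)$ is a uniformly random pair $(u,v)\in E$, and $\mathrm{dec}_G(v_1,v_2)=1$ if $(v_1,v_2)\in E$ and $0$ otherwise. *)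

(* Defs.v *)
From mathcomp Require Import all_boot all_order all_algebra.
Set Implicit Arguments. Unset Strict Implicit. Unset Printing Implicit Defensive.
Import Order.TTheory GRing.Theory Num.Theory.
Local Open Scope ring_scope.

Definition edges (V : finType) (e : rel V) : {set V * V} :=
  [set p : V * V | e p.1 p.2].

Definition undirected (V : finType) (e : rel V) : Prop := symmetric e.

Definition regular (V : finType) (e : rel V) (d : nat) : Prop :=
  forall v : V, #|[set u | e v u]| = d.

Definition edges_between (V : finType) (e : rel V) (S T : {set V})
  : {set V * V} := [set p in edges e | (p.1 \in S) && (p.2 \in T)].

Definition dec (V : finType) (e : rel V) (p : V * V) : bool := e p.1 p.2.

(* Output distribution of enc_G b: uniform over (V x V) \ E for b = 0,
   uniform over E for b = 1.  enc_prob e b p = Pr[enc_G(b) = p]. *)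
Definition enc_support (V : finType) (e : rel V) (b : bool) : {set V * V} :=
  if b then edges e else ~: edges e.

Definition enc_prob (V : finType) (e : rel V) (b : bool) (p : V * V) : rat :=
  if p \in enc_support e b then (#|enc_support e b|%:R)^-1 else 0.

Definition pairf (V : finType) (g h : V -> V) (p : V * V) : V * V :=
  (g p.1, h p.2).

Definition flip_prob (V : finType) (e : rel V) (g h : V -> V) : rat :=
  \sum_(b : bool) (1 / 2) *
    \sum_(p : V * V | dec e (pairf g h p) == ~~ b) enc_prob e b p.

(* Main.v *)
Require Import Defs.
From mathcomp Require Import all_boot all_order all_algebra.
From mathcomp Require Import ring.
Set Implicit Arguments. Unset Strict Implicit. Unset Printing Implicit Defensive.
Import Order.TTheory GRing.Theory Num.Theory.
Local Open Scope ring_scope.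

Lemma sum_enc (T : finType) (P : pred T) (A : {set T}) (c : rat) :
  \sum_(p | P p) (if p \in A then c else 0) = #|[set p in A | P p]|%:R * c.
Proof.
rewrite -big_mkcondr /= (eq_bigl (mem [set p in A | P p])); last first.
  by move=> p; rewrite !inE andbC.
by rewrite sumr_const mulr_natl.
Qed.

Lemma card_edges (V : finType) (e : rel V) d :
  regular e d -> #|edges e| = (d * #|V|)%N.
Proof.
move=> reg.
rewrite -sum1_card (eq_bigl (fun p : V * V => predT p.1 && e p.1 p.2)); last first.
  by move=> p; rewrite !inE.
rewrite -(pair_big_dep predT (fun v u => e v u) (fun _ _ => 1%N)) /=.
rewrite (eq_bigr (fun _ => d)); first by rewrite sum_nat_const mulnC.
move=> v _; rewrite -(reg v) -sum1_card; apply: eq_bigl => u; by rewrite inE.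
Qed.

Lemma count_pre (V : finType) (e : rel V) (g h : V -> V) (A : {set V * V}) :
  #|[set p in A | pairf g h p \in edges e]| =
  (\sum_(q in edges e) #|[set p in A | pairf g h p == q]|)%N.
Proof.
rewrite -sum1_card.
rewrite (partition_big (pairf g h) (mem (edges e))) /=; last first.
  by move=> p; rewrite inE => /andP[].
apply: eq_bigr => q qE; rewrite -sum1_card; apply: eq_bigl => p.
rewrite !inE -andbA; case: eqP => [->|]; last by rewrite !andbF.
by move: qE; rewrite inE => ->.
Qed.

Lemma fiber_all (V : finType) (g h : V -> V) (q : V * V) :
  #|[set p in [set: V * V] | pairf g h p == q]| =
  (#|g @^-1: [set q.1]| * #|h @^-1: [set q.2]|)%N.
Proof.
rewrite -cardsX; apply: eq_card => p; rewrite !inE /pairf.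
by case: p q => [a b] [c d] /=; rewrite xpair_eqE.
Qed.

Lemma fiber_E (V : finType) (e : rel V) (g h : V -> V) (q : V * V) :
  [set p in edges e | pairf g h p == q] =
  edges_between e (g @^-1: [set q.1]) (h @^-1: [set q.2]).
Proof.
apply/setP => p; rewrite !inE /pairf.
by case: p q => [a b] [c d] /=; rewrite xpair_eqE.
Qed.

Lemma split_card (T : finType) (A : {set T}) (P : pred T) :
  (#|[set p in A | P p]| + #|[set p in A | ~~ P p]|)%N = #|A|.
Proof.
rewrite -[in RHS](cardsID [set p | P p] A).
by congr addn; apply: eq_card => p; rewrite !inE // andbC.
Qed.

Theorem proposition3p2 (V : finType) (e : rel V) (d : nat)
  (g h : V -> V) :
  undirected e -> regular e d -> (0 < d)%N -> (d < #|V|)%N ->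
  flip_prob e g h =
    1 / 2 + (2 * d%:R * (#|V|%:R - d%:R))^-1 *
      \sum_(p in edges e)
        (d%:R * #|g @^-1: [set p.1]|%:R * #|h @^-1: [set p.2]|%:R / #|V|%:R
         - #|edges_between e (g @^-1: [set p.1]) (h @^-1: [set p.2])|%:R
         : rat).
Proof.
move=> _ reg d0 dn.
set E := edges e; set F := pairf g h.
set x := #|[set p in E | F p \in E]|.
set y := #|[set p in ~: E | F p \in E]|.
have hx : (\sum_(q in E) #|edges_between e (g @^-1: [set q.1]) (h @^-1: [set q.2])|)%N = x.
  by rewrite /x count_pre; apply: eq_bigr => q _; rewrite fiber_E.
have hS : (\sum_(q in E) (#|g @^-1: [set q.1]| * #|h @^-1: [set q.2]|))%N = (x + y)%N.
  have -> : (\sum_(q in E) (#|g @^-1: [set q.1]| * #|h @^-1: [set q.2]|))%N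
     = #|[set p in [set: V * V] | F p \in E]|.
    by rewrite count_pre; apply: eq_bigr => q _; rewrite fiber_all.
  rewrite -(split_card _ (mem E)); congr (_ + _)%N; apply: eq_card => p;
  by rewrite !inE andbC.
have hT : #|[set p in E | dec e (F p) == ~~ true]| = (#|E| - x)%N.
  rewrite -(split_card E (fun p => F p \in E)) addKn; apply: eq_card => p.
  by rewrite !inE /dec eqbF_neg.
have hF : #|[set p in ~: E | dec e (F p) == ~~ false]| = y.
  by apply: eq_card => p; rewrite !inE /dec eqb_id.
have hxE : (x <= #|E|)%N by rewrite -(split_card E (fun p => F p \in E)) leq_addr.
have hC : #|E|%:R + #|~: E|%:R = #|V|%:R * #|V|%:R :> rat.
  by rewrite -natrD cardsC card_prod natrM.
have hE : #|E| = (d * #|V|)%N by apply: card_edges.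
rewrite /flip_prob big_bool /= /enc_prob.
rewrite !sum_enc /enc_support /=.
rewrite hT hF natrB // hE.
rewrite sumrB -natr_sum hx.
rewrite (eq_bigr (fun i => d%:R / #|V|%:R *
   (#|g @^-1: [set i.1]| * #|h @^-1: [set i.2]|)%:R)); last first.
  by move=> i _; rewrite natrM; ring.
rewrite -mulr_sumr -natr_sum hS.
have -> : #|~: edges e|%:R = #|V|%:R * #|V|%:R - #|E|%:R :> rat.
  by rewrite -hC addrAC subrr add0r.
rewrite hE !natrM natrD.
have n0 : (#|V|%:R : rat) != 0 by rewrite pnatr_eq0 -lt0n (leq_ltn_trans _ dn).
have d0' : (d%:R : rat) != 0 by rewrite pnatr_eq0 -lt0n.
have nd : (#|V|%:R - d%:R : rat) != 0.
  by rewrite subr_eq0 eqr_nat neq_ltn dn orbT.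
field.
by rewrite n0 d0' nd -mulrBl mulf_neq0.
Qed.
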